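(* Let $I,J\in\mathcal I$. Then there is a reconfiguration sequence between $I$ and $J$ if and only if $I$ and $J$ are $\vartriangleleft$-equivalent.
   Context: Let $(a_i)_{i=1,\dots,n}$ be a sequence of distinct integers between $1$ and $n$, and set $a_0=0$; write $A=(a_i)_{i=0,1,\dots,n}$. A set $I\subseteq\{0\}\cup[n]$ is feasible if $a_i<a_j$ for all $i,j\in I$ with $i<j$; $\mathcal I$ denotes the family of feasible sets of maximum cardinality. A reconfiguration sequence between $I$ and $J$ is a sequence of feasible sets $I_0=I,I_1,\dots,I_\ell=J$ such that for each $1\le i\le\ell$, $I_i=(I_{i-1}\cup\{j\})\setminus\{k\}$ for some $j\notin I_{i-1}$, $k\in I_{i-1}$. Patience sorting: start with empty piles $P_0,\dots,P_n$; for $i=0,1,\dots,n$ in order, put $a_i$ on top of the pile $P_j$ with smallest index $j$ such that $P_j$ is empty or the top element of $P_j$ is greater than $a_i$. Let $P_0,\dots,P_k$ be the resulting nonempty piles. Say $a_u$ is placed below $a_v$ on a pile if both lie on the same pile and $a_u$ was put there before $a_v$. For $I,J\in\mathcal I$, write $I\vartriangleleft J$ if $I\setminus J=\{u\}$ and $J\setminus I=\{v\}$ for some $u,v$ such that $a_u$ is placed strictly below $a_v$ on pile $P_i$ for some $1\le i\le k$. For $I\in\mathcal I$, $\mathcal M(I)\subseteq\mathcal I$ is the smallest family containing $I$ such that whenever $J\in\mathcal M(I)$ and $J'\vartriangleleft J$ then $J'\in\mathcal M(I)$. A set is $\vartriangleleft$-minimal if there is no $J\in\mathcal I$ with $J\vartriangleleft$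 it; each $\mathcal M(I)$ contains exactly one $\vartriangleleft$-minimal set. Two sets $I,J\in\mathcal I$ are $\vartriangleleft$-equivalent if the $\vartriangleleft$-minimal set in $\mathcal M(I)$ equals the $\vartriangleleft$-minimal set in $\mathcal M(J)$. *)

(* Defs.v *)
From mathcomp Require Import all_boot.
Set Implicit Arguments. Unset Strict Implicit. Unset Printing Implicit Defensive.

(* Indices 0..n are elements of 'I_n.+1 (or nats).  The paper's a_1..a_n are
   a : 'I_n -> nat, with a j standing for a_{j+1}; a_0 = 0. *)
Definition Aseq (n : nat) (a : 'I_n -> nat) : nat -> nat :=
  fun i => nth 0 (0 :: [seq a j | j <- enum 'I_n]) i.

Section Defs.
Variables (n : nat) (a : 'I_n -> nat).
Local Notation A := (Aseq a).

Definition feasible (I : {set 'I_n.+1}) : Prop :=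
  forall i j : 'I_n.+1, i \in I -> j \in I -> i < j -> A i < A j.

(* members of the family \mathcal I: feasible of maximum cardinality *)
Definition maxfeas (I : {set 'I_n.+1}) : Prop :=
  feasible I /\ forall J, feasible J -> #|J| <= #|I|.

Definition rstep (I I' : {set 'I_n.+1}) : Prop :=
  exists j k, j \notin I /\ k \in I /\ I' = (I :|: [set j]) :\ k.

Fixpoint rpath (I : {set 'I_n.+1}) (s : seq {set 'I_n.+1}) : Prop :=
  match s with
  | [::] => True
  | I' :: s' => rstep I I' /\ rpath I' s'
  end.

Definition reconf (I J : {set 'I_n.+1}) : Prop :=
  exists s : seq {set 'I_n.+1},
    feasible I /\ (forall K, K \in s -> feasible K) /\ rpath I s /\ last I s = J.

(* A pile is a list of indices, top element first; the
   piles P_0, P_1, ... are kept in a list.  Nonempty piles always form a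
   prefix, so "the first pile that is empty or whose top is greater than a_x"
   is the first pile in the list with top greater than a_x, or a new pile. *)
Fixpoint place (x : nat) (ps : seq (seq nat)) : seq (seq nat) :=
  match ps with
  | [::] => [:: [:: x]]
  | p :: ps' => if A x < A (head 0 p) then (x :: p) :: ps' else p :: place x ps'
  end.

Definition piles : seq (seq nat) := foldl (fun ps i => place i ps) [::] (iota 0 n.+1).

Definition below (u v : nat) : Prop :=
  exists i, 1 <= i < size piles /\
    let p := nth [::] piles i in
    [/\ u \in p, v \in p, u != v & index v p < index u p].

Definition tri (I J : {set 'I_n.+1}) : Prop :=
  maxfeas I /\ maxfeas J /\
  exists u v : 'I_n.+1, I :\: J = [set u] /\ J :\: I = [set v] /\ below u v.

Inductive Mfam (I : {set 'I_n.+1}) : {set 'I_n.+1} -> Prop :=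
| Mfam_self : Mfam I I
| Mfam_pred J J' : Mfam I J -> tri J' J -> Mfam I J'.

Definition tri_minimal (K : {set 'I_n.+1}) : Prop :=
  ~ exists J, maxfeas J /\ tri J K.

Definition tri_equiv (I J : {set 'I_n.+1}) : Prop :=
  exists K, [/\ Mfam I K, Mfam J K & tri_minimal K].

End Defs.

(* Main.v *)
Require Import Defs.
From mathcomp Require Import all_boot zify.
From Stdlib Require Import Classical.
Set Implicit Arguments. Unset Strict Implicit. Unset Printing Implicit Defensive.


Section SetLemmas.
Variable T : finType.

Lemma neq_in (S : {set T}) x y : x \notin S -> y \in S -> (x == y) = false.
Proof. by move=> hx hy; apply/eqP => e; rewrite e hy in hx. Qed.

Lemma swap_diff (X : {set T}) j k : j \notin X -> k \in X ->
  ((X :|: [set j]) :\ k) :\: X = [set j] /\ X :\: ((X :|: [set j]) :\ k) = [set k].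
Proof.
move=> hj hk; have njk := neq_in hj hk.
split; apply/setP => z; rewrite !inE.
- have [->|nz] := eqVneq z j; first by rewrite njk hj orbT.
  by case: (z == k); case: (z \in X).
- have [->|nz] := eqVneq z k; first by rewrite hk.
  by case: (z == j); case: (z \in X).
Qed.

Lemma diff_swap (X Y : {set T}) u v : X :\: Y = [set u] -> Y :\: X = [set v] ->
  [/\ X = (Y :|: [set u]) :\ v, u \notin Y, u \in X, v \in Y & v \notin X].
Proof.
move=> h1 h2.
have hu : u \in X :\: Y by rewrite h1 set11.
have hv : v \in Y :\: X by rewrite h2 set11.
rewrite !inE in hu hv; case/andP: hu => -> ->; case/andP: hv => -> ->.
split => //; apply/setP => z; move/setP: h1 => /(_ z); move/setP: h2 => /(_ z).
rewrite !inE; case: (z \in X); case: (z \in Y); case: (z == u); case: (z == v) => //.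
Qed.

Lemma card_swap (X : {set T}) j k : j \notin X -> k \in X -> #|(X :|: [set j]) :\ k| = #|X|.
Proof.
move=> hj hk.
have h1 := cardsD1 k (X :|: [set j]).
rewrite !inE hk /= in h1.
have h2 : #|X :|: [set j]| = #|X|.+1 by rewrite setUC cardsU1 hj.
rewrite h2 in h1; by case: h1.
Qed.

End SetLemmas.

Section Pat.
Variables (n : nat) (a : 'I_n -> nat).
Hypothesis a_inj : injective a.
Hypothesis a_range : forall j, 1 <= a j <= n.
Local Notation A := (Aseq a).

Lemma AS k (hk : k < n) : A k.+1 = a (Ordinal hk).
Proof.
rewrite /Aseq /= (nth_map (Ordinal hk)) ?size_enum_ord //.
congr a; exact: (nth_ord_enum (Ordinal hk) (Ordinal hk)).
Qed.

Lemma A_pos x : 0 < x <= n -> 0 < A x.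
Proof.
case: x => // k /= hk; rewrite (AS hk).
by case/andP: (a_range (Ordinal hk)).
Qed.

Lemma A_inj x y : x <= n -> y <= n -> A x = A y -> x = y.
Proof.
case: x => [|x]; case: y => [|y] //= hx hy.
- by move=> h; have := A_pos (x:=y.+1); rewrite hy -h => /(_ isT).
- by move=> h; have := A_pos (x:=x.+1); rewrite hx h => /(_ isT).
rewrite (AS hx) (AS hy) => /a_inj [->] //.
Qed.

Definition r x y := (y < x) && (A x < A y).

Lemma r_trans : transitive r.
Proof.
move=> y x z /andP[h1 h2] /andP[h3 h4]; apply/andP; split.
  exact: ltn_trans h3 h1.
exact: ltn_trans h2 h4.
Qed.

Definition fi x ps := find (fun p => A x < A (head 0 p)) ps.

Lemma place_eq x ps :
  place a x ps = set_nth [::] ps (fi x ps) (x :: nth [::] ps (fi x ps)).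
Proof.
elim: ps => [|p ps IH] //=; rewrite /fi /=.
by case: ifP => //= _; rewrite -IH.
Qed.

Lemma head_min p y : pairwise r p -> y \in p -> A (head 0 p) <= A y.
Proof.
case: p => // h t /=; rewrite inE => /andP[/allP H _] /orP[/eqP->//|yt].
by case/andP: (H y yt) => _ /ltnW.
Qed.

Record inv m ps : Prop := Inv {
  i_lt : forall y j, y \in nth [::] ps j -> y < m;
  i_ex : forall y, y < m -> exists j, y \in nth [::] ps j;
  i_un : forall y j j', y \in nth [::] ps j -> y \in nth [::] ps j' -> j = j';
  i_ne : forall j, j < size ps -> nth [::] ps j != [::];
  i_pw : forall j, pairwise r (nth [::] ps j);
  i_top : forall j, j.+1 < size ps ->
     A (head 0 (nth [::] ps j)) < A (head 0 (nth [::] ps j.+1));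
  i_f2 : forall x y j j', x \in nth [::] ps j -> y \in nth [::] ps j' ->
     x < y -> A x < A y -> j < j';
  i_f4 : forall x j, x \in nth [::] ps j.+1 ->
     exists2 y, y \in nth [::] ps j & (y < x) && (A y < A x);
  i_z : forall x, x \in nth [::] ps 0 -> x = 0 }.

Lemma inv0 : inv 0 [::].
Proof.
split=> //=; intros; repeat match goal with H : is_true (_ \in nth _ [::] _) |- _ => rewrite nth_nil in H end. all: try by []. all: try by case: j.
Qed.

Lemma mem_size ps (y : nat) j : y \in nth [::] ps j -> j < size ps.
Proof. by case: (ltnP j (size ps)) => // h; rewrite nth_default. Qed.

Lemma head_mem ps j m : inv m ps -> j < size ps -> head 0 (nth [::] ps j) \in nth [::] ps j.
Proof.
move=> iv /(i_ne iv); case: (nth [::] ps j) => //= h t _; exact: mem_head.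
Qed.

Lemma top_mono m ps j j' : inv m ps -> j <= j' -> j' < size ps ->
  A (head 0 (nth [::] ps j)) <= A (head 0 (nth [::] ps j')).
Proof.
move=> iv; elim: j' => [|j' IH]; first by rewrite leqn0 => /eqP->.
rewrite leq_eqVlt => /orP[/eqP->//|hj] hs.
apply: leq_trans (IH hj (ltnW hs)) _; exact: ltnW (i_top iv hs).
Qed.

Lemma inv_step m ps : m <= n -> inv m ps -> inv m.+1 (place a m ps).
Proof.
move=> hm iv; rewrite place_eq; set i := fi m ps.
set ps' := set_nth _ _ _ _.
have hi : i <= size ps by exact: find_size.
have hbef j : j < i -> A (head 0 (nth [::] ps j)) <= A m.
  by rewrite /i /fi => hj; have /= h := before_find [::] hj; rewrite leqNgt h.
have hat : i < size ps -> A m < A (head 0 (nth [::] ps i)).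
  rewrite /i /fi => his; have hh : has (fun p => A m < A (head 0 p)) ps.
    by rewrite has_find.
  exact: (nth_find [::] hh).
have nth' j : nth [::] ps' j = if j == i then m :: nth [::] ps i else nth [::] ps j.
  by rewrite /ps' nth_set_nth /=.
have size' j : (j < size ps') = (j == i) || (j < size ps).
  rewrite /ps' size_set_nth leq_max ltnS leq_eqVlt.
  case: (j =P i) => [->|_] //=; case: (ltnP j i) => //= hj.
  by rewrite (leq_trans hj hi).
have oldlt y j : y \in nth [::] ps j -> y < m := i_lt iv (j:=j).
have mem' y j : y != m -> (y \in nth [::] ps' j) = (y \in nth [::] ps j).
  move=> hy; rewrite nth'; case: (j =P i) => [->|] //.
  by rewrite inE (negPf hy).
have memm j : (m \in nth [::] ps' j) = (j == i).
  rewrite nth'; case: (j =P i) => _; first by rewrite mem_head.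
  by apply/negP => /oldlt; rewrite ltnn.
have Ainj y : y < m -> A y != A m.
  move=> hy; apply/eqP => /A_inj.
  by move=> /(_ (leq_trans (ltnW hy) hm) hm) h; rewrite h ltnn in hy.
have nem j : j < size ps -> head 0 (nth [::] ps j) \in nth [::] ps j by exact: head_mem iv.
split.
- move=> y j; case: (y =P m) => [->//|/eqP hy]; rewrite mem' //.
  by move/oldlt/ltnW.
- move=> y; rewrite ltnS leq_eqVlt => /orP[/eqP->|hy]; first by exists i; rewrite memm.
  case: (i_ex iv hy) => j hj; exists j; rewrite mem' //.
  by rewrite neq_ltn hy.
- move=> y j j'; case: (y =P m) => [->|/eqP hy]; first by rewrite !memm => /eqP-> /eqP->.
  rewrite !mem' // => h1 h2; exact: (i_un iv h1 h2).
- move=> j; rewrite size' nth' => /orP[/eqP->|hj]; first by rewrite eqxx.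
  by case: (j =P i) => // _; exact: i_ne iv _ hj.
- move=> j; rewrite nth'; case: ifP => [_|_]; last exact: (i_pw iv j).
  rewrite pairwise_cons (i_pw iv) andbT; apply/allP => y hy.
  have his := mem_size hy.
  rewrite /r (oldlt _ _ hy) /=.
  exact: leq_trans (hat his) (head_min (i_pw iv i) hy).
- move=> j hj; move: (hj); rewrite size' => hj2; rewrite !nth'.
  case: ifP => [/eqP ej|/negbT nej]; case: ifP => [/eqP ej1|/negbT nej1] /=.
  + by exfalso; lia.
  + have hs : j.+1 < size ps by move: hj2; rewrite (negPf nej1).
    apply: ltn_trans (i_top iv hs); rewrite ej; apply: hat; rewrite -ej; exact: ltnW.
  + have hjs : j < size ps by rewrite (leq_trans _ hi) // -ej1.
    have hl : A (head 0 (nth [::] ps j)) <= A m by apply: hbef; rewrite -ej1.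
    rewrite ltn_neqAle hl andbT; apply: Ainj; exact: oldlt (nem _ hjs).
  + by apply: (i_top iv); move: hj2; rewrite (negPf nej1).
- move=> x y j j'; case: (x =P m) => [->|/eqP hx].
    move=> _ hy hlt; case: (y =P m) => [ey|/eqP ney]; first by rewrite ey ltnn in hlt.
    rewrite mem' // in hy; by have := oldlt _ _ hy; rewrite ltnNge (ltnW hlt).
  case: (y =P m) => [->|/eqP hy]; last by rewrite !mem' // => h1 h2; exact: (i_f2 iv h1 h2).
  rewrite mem' // memm => hxj /eqP -> _ hA.
  rewrite ltnNge; apply/negP => hij.
  have hjs := mem_size hxj.
  have := top_mono iv hij hjs.
  rewrite leqNgt; move/negP; apply.
  apply: leq_ltn_trans (head_min (i_pw iv j) hxj) _.
  apply: ltn_trans hA _; apply: hat; exact: leq_ltn_trans hij hjs.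
- move=> x j; case: (x =P m) => [->|/eqP hx].
    rewrite memm => /eqP ej.
    have hjs : j < size ps by rewrite (leq_trans _ hi) // -ej.
    exists (head 0 (nth [::] ps j)).
      rewrite mem' ?nem //; apply/eqP => e; have := oldlt _ _ (nem _ hjs).
      by rewrite e ltnn.
    have hl : A (head 0 (nth [::] ps j)) <= A m by apply: hbef; rewrite -ej.
    rewrite (oldlt _ _ (nem _ hjs)) /= ltn_neqAle hl andbT; apply: Ainj.
    exact: oldlt (nem _ hjs).
  rewrite mem' // => hxj; case: (i_f4 iv hxj) => y hy /andP[h1 h2].
  exists y; last by rewrite h1 h2.
  rewrite mem' //; apply/eqP => e; have := oldlt _ _ hxj.
  by rewrite -e ltnNge (ltnW h1).
- move=> x; case: (x =P m) => [->|/eqP hx]; last by rewrite mem' // => h1; exact: (i_z iv h1).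
  rewrite memm => /eqP ei.
  case: (posnP m) => [->//|mpos]; exfalso.
  case: (i_ex iv mpos) => j hj.
  have hs : 0 < size ps by case: (size ps) (mem_size hj).
  have hh : i < size ps by rewrite -ei.
  have := hat hh.
  rewrite -ei.
  have -> := i_z iv (head_mem iv hs).
  by rewrite /Aseq /=.
Qed.


Lemma inv_piles : inv n.+1 (piles a).
Proof.
suff H : forall m, m <= n.+1 ->
    inv m (foldl (fun ps i => place a i ps) [::] (iota 0 m)) by exact: H.
elim=> [|m IH] hm; first exact: inv0.
have -> : iota 0 m.+1 = iota 0 m ++ [:: m] by rewrite -addn1 iotaD.
rewrite foldl_cat /=.
by apply: inv_step => //; apply: IH; exact: ltnW.
Qed.

Local Notation P := (piles a).

Definition pi (x : 'I_n.+1) : nat := find (fun p => (x:nat) \in p) P.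

Lemma pi_has (x : 'I_n.+1) : has (fun p => (x:nat) \in p) P.
Proof.
have [j hj] := i_ex inv_piles (ltn_ord x).
apply/hasP; exists (nth [::] P j) => //; apply: mem_nth; exact: mem_size hj.
Qed.

Lemma pi_mem (x : 'I_n.+1) : (x:nat) \in nth [::] P (pi x).
Proof. exact: (nth_find [::] (pi_has x)). Qed.

Lemma pi_lt (x : 'I_n.+1) : pi x < size P.
Proof. by rewrite /pi -has_find pi_has. Qed.

Lemma pi_uniq (x : 'I_n.+1) j : (x:nat) \in nth [::] P j -> pi x = j.
Proof. move=> h; exact: (i_un inv_piles (pi_mem x) h). Qed.

Lemma feas_pi S (x y : 'I_n.+1) : feasible a S -> x \in S -> y \in S ->
  pi x < pi y -> (x < y) && (A x < A y).
Proof.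
move=> hS hx hy hp; case: (ltngtP x y) => h.
- by rewrite ?h (hS x y).
- have hA := hS y x hy hx h.
  have := i_f2 inv_piles (pi_mem y) (pi_mem x) h hA.
  by rewrite ltnNge (ltnW hp).
- by move/ord_inj: h => e; rewrite e ltnn in hp.
Qed.

Lemma feas_pi_inj S (x y : 'I_n.+1) : feasible a S -> x \in S -> y \in S ->
  pi x = pi y -> x = y.
Proof.
move=> hS hx hy hp; case: (ltngtP x y) => h.
- have := i_f2 inv_piles (pi_mem x) (pi_mem y) h (hS x y hx hy h).
  by rewrite hp ltnn.
- have := i_f2 inv_piles (pi_mem y) (pi_mem x) h (hS y x hy hx h).
  by rewrite hp ltnn.
- exact: ord_inj.
Qed.

Lemma chain j : j < size P -> forall x : 'I_n.+1, (x:nat) \in nth [::] P j ->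
  exists S : {set 'I_n.+1}, [/\ feasible a S, #|S| = j.+1, x \in S &
     forall y : 'I_n.+1, y \in S -> (y <= x) && (A y <= A x)].
Proof.
elim: j => [|j IH] hj x hx.
  exists [set x]; split; rewrite ?cards1 ?set11 //.
  - by move=> i k; rewrite !inE => /eqP-> /eqP->; rewrite ltnn.
  - by move=> y; rewrite inE => /eqP->; rewrite !leqnn.
case: (i_f4 inv_piles hx) => y hy /andP[h1 h2].
have hyn : y < n.+1 by apply: ltn_trans h1 _.
have hy' : ((inord y : 'I_n.+1) : nat) = y by rewrite inordK.
have := IH (ltnW hj) (inord y); rewrite hy' => /(_ hy) [S [hS hc hyS hb]].
have xS : x \notin S.
  by apply/negP => /hb /andP[h3 _]; move: h3; rewrite leqNgt h1.
exists (x |: S); split.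
- move=> i k; rewrite !inE => /orP[/eqP->|hi] /orP[/eqP->|hk] hik.
  + by rewrite ltnn in hik.
  + have /andP[h3 _] := hb k hk.
    by have := leq_ltn_trans h3 (ltn_trans h1 hik); rewrite ltnn.
  + have /andP[_ h3] := hb i hi.
    exact: leq_ltn_trans h3 h2.
  + exact: hS.
- by rewrite cardsU1 xS hc.
- by rewrite setU11.
- move=> z; rewrite !inE => /orP[/eqP->|hz]; first by rewrite !leqnn.
  have /andP[h3 h4] := hb z hz.
  by rewrite (leq_trans h3 (ltnW h1)) (leq_trans h4 (ltnW h2)).
Qed.

Lemma size_P_pos : 0 < size P.
Proof. have := pi_lt ord0; by case: (size P). Qed.

Lemma exists_lis : exists S, feasible a S /\ #|S| = size P.
Proof.
have hK : (size P).-1 < size P by rewrite prednK ?size_P_pos.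
have hm := head_mem inv_piles hK.
have hl := i_lt inv_piles hm.
have := chain hK (x := inord (head 0 (nth [::] P (size P).-1))).
rewrite inordK // => /(_ hm) [S [hS hc _ _]].
by exists S; rewrite hc prednK ?size_P_pos.
Qed.

Lemma card_feas S : feasible a S -> #|S| <= size P.
Proof.
move=> hS; rewrite cardE -(size_map pi) -(size_iota 0 (size P)).
apply: uniq_leq_size.
  rewrite map_inj_in_uniq ?enum_uniq // => x y; rewrite !mem_enum => hx hy.
  exact: (feas_pi_inj hS hx hy).
by move=> z /mapP [x _ ->]; rewrite mem_iota add0n pi_lt.
Qed.

Lemma maxfeas_card I : maxfeas a I -> #|I| = size P.
Proof.
case=> hI hmax; apply/eqP; rewrite eqn_leq card_feas //.
by have [S [hS <-]] := exists_lis; apply: hmax.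
Qed.

Lemma maxfeas_of S : feasible a S -> #|S| = size P -> maxfeas a S.
Proof. by move=> hS hc; split => // J hJ; rewrite hc card_feas. Qed.

Lemma maxfeas_surj I j : maxfeas a I -> j < size P -> exists2 x, x \in I & pi x = j.
Proof.
move=> hI hj.
have hu : uniq (map pi (enum I)).
  rewrite map_inj_in_uniq ?enum_uniq // => x y; rewrite !mem_enum => hx hy.
  exact: (feas_pi_inj (proj1 hI) hx hy).
have hsub : {subset map pi (enum I) <= iota 0 (size P)}.
  by move=> z /mapP [x _ ->]; rewrite mem_iota add0n pi_lt.
have hsz : size (iota 0 (size P)) <= size (map pi (enum I)).
  by rewrite size_iota size_map -cardE maxfeas_card.
have [_ eqs] := uniq_min_size hu hsub hsz.
have : j \in map pi (enum I) by rewrite eqs mem_iota add0n.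
by case/mapP => x; rewrite mem_enum => hx ->; exists x.
Qed.

Lemma pi0 (x : 'I_n.+1) : pi x = 0 -> (x : nat) = 0.
Proof. move=> h; have := pi_mem x; rewrite h => h0; exact: (i_z inv_piles h0). Qed.

Lemma below_inv (u v : 'I_n.+1) : below a u v ->
  [/\ pi u = pi v, 0 < pi u, u < v & A v < A u].
Proof.
case=> i [/andP[h1 h2]] /= [hu hv nuv hidx].
have pu := pi_uniq hu; have pv := pi_uniq hv.
have hs : sorted r (nth [::] P i) by rewrite (sorted_pairwise r_trans) (i_pw inv_piles).
have /andP[h3 h4] := sorted_ltn_index r_trans hs _ _ hv hu hidx.
by rewrite pu pv h1.
Qed.

Lemma below_of (u v : 'I_n.+1) : pi u = pi v -> 0 < pi u -> u < v -> below a u v.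
Proof.
move=> e hp huv; exists (pi u); split; first by rewrite hp pi_lt.
have hu := pi_mem u; have hv := pi_mem v; rewrite -e in hv.
split => //; first by rewrite neq_ltn huv.
have hs : sorted r (nth [::] P (pi u)) by rewrite (sorted_pairwise r_trans) (i_pw inv_piles).
case: (ltngtP (index (v:nat) (nth [::] P (pi u))) (index (u:nat) (nth [::] P (pi u)))) => // h.
- have /andP[h3 _] := sorted_ltn_index r_trans hs _ _ hu hv h.
  by have := ltn_trans h3 huv; rewrite ltnn.
- have := congr1 (nth 0 (nth [::] P (pi u))) h.
  rewrite !nth_index // => e2; by rewrite e2 ltnn in huv.
Qed.


Lemma tri_inv J' J : tri a J' J -> exists u v : 'I_n.+1,
  [/\ J' = (J :|: [set u]) :\ v, u \notin J, v \in J,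
      J = (J' :|: [set v]) :\ u & [/\ pi u = pi v, 0 < pi u, u < v & A v < A u]].
Proof.
rewrite /tri => -[_ [_ [u [v [d1 [d2 b]]]]]].
have [e1 hu _ hv _] := diff_swap d1 d2.
have [e2 _ _ _ _] := diff_swap d2 d1.
by exists u, v; split => //; apply: below_inv.
Qed.

Lemma tri_rstep J' J : tri a J' J -> rstep J J' /\ rstep J' J.
Proof.
rewrite /tri => -[_ [_ [u [v [d1 [d2 b]]]]]].
have [e1 hu _ hv _] := diff_swap d1 d2.
have [e2 hv' _ hu' _] := diff_swap d2 d1.
by split; [exists u, v | exists v, u].
Qed.

Lemma step_tri I I' : maxfeas a I -> feasible a I' -> rstep I I' ->
  maxfeas a I' /\ (tri a I' I \/ tri a I I').
Proof.
move=> mI fI' [j [k [hj [hk e]]]].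
have mI' : maxfeas a I' by apply: maxfeas_of => //; rewrite e card_swap // maxfeas_card.
split => //.
have [d1 d2] := swap_diff hj hk; rewrite -e in d1 d2.
have [z hz ez] := maxfeas_surj mI' (pi_lt k).
have ejk : pi j = pi k.
  case: (eqVneq z j) => [<-//|nzj].
  move: (hz); rewrite e !inE (negPf nzj) orbF => /andP[nzk hzI].
  by have := feas_pi_inj (proj1 mI) hzI hk ez; move/eqP: nzk.
have njk : j != k by apply/eqP => ee; rewrite ee hk in hj.
have pp : 0 < pi k.
  rewrite lt0n; apply/negP => /eqP h0.
  have := pi0 h0; rewrite -ejk in h0; have := pi0 h0 => h1 h2.
  by move/eqP: njk; apply; apply: ord_inj; rewrite h1 h2.
case: (ltngtP j k) => h.
- left; split => //; split => //; exists j, k; split; [done|split; [done|]].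
  by apply: below_of => //; rewrite ejk.
- right; split => //; split => //; exists k, j; split; [done|split; [done|]].
  by apply: below_of.
- by move/eqP: njk; case; apply: ord_inj.
Qed.

Lemma Mfam_trans I J K : Mfam a I J -> Mfam a J K -> Mfam a I K.
Proof.
move=> h1 h2; elim: h2 => [//|J0 J1 _ IH t]; exact: Mfam_pred IH t.
Qed.

Lemma Mfam_one J' J : tri a J' J -> Mfam a J J'.
Proof. move=> t; exact: Mfam_pred (Mfam_self _ _) t. Qed.

Lemma Mfam_left I K : Mfam a I K -> K = I \/ exists J, tri a J I /\ Mfam a J K.
Proof.
elim=> [|J J' _ [->|[J0 [t m]]] t']; first by left.
- by right; exists J'; split => //; exact: Mfam_self.
- by right; exists J0; split => //; exact: Mfam_pred m t'.
Qed.

Lemma Mfam_max I K : maxfeas a I -> Mfam a I K -> maxfeas a K.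
Proof. by move=> mI; elim=> // J J' _ _ [? _]. Qed.

Definition mu (J : {set 'I_n.+1}) := \sum_(x in J) (x : nat).

Lemma mu_tri J' J : tri a J' J -> mu J' < mu J.
Proof.
move=> /tri_inv [u [v [e1 hu hv _ [_ _ huv _]]]].
have nuv : u != v by apply/eqP => ee; rewrite ee hv in hu.
have e : J' = u |: (J :\ v).
  rewrite e1; apply/setP => z; rewrite !inE.
  have [->|nz] := eqVneq z u; first by rewrite nuv /= orbT.
  by rewrite orbF.
rewrite /mu e big_setU1 /=; last by rewrite !inE (negPf hu) andbF.
rewrite [X in _ < X](big_setD1 v) //=.
by rewrite ltn_add2r.
Qed.

Lemma exists_min I : maxfeas a I -> exists K, Mfam a I K /\ tri_minimal a K.
Proof.
move=> mI; move: {2}(mu I).+1 (ltnSn (mu I)) => m; elim: m I mI => // m IH I mI hm.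
case: (classic (exists J, maxfeas a J /\ tri a J I)) => [[J [mJ t]]|hno].
- have [K [mK hK]] := IH J mJ (leq_trans (mu_tri t) (hm : mu I < m.+1)).
  by exists K; split => //; exact: Mfam_trans (Mfam_one t) mK.
- by exists I; split => //; exact: Mfam_self.
Qed.

Lemma confl I J1 J2 : maxfeas a I -> tri a J1 I -> tri a J2 I ->
  exists L, Mfam a J1 L /\ Mfam a J2 L.
Proof.
move=> mI t1 t2.
have mJ1 := proj1 t1; have mJ2 := proj1 t2.
move: (t1) (t2) => [_ [_ [u1 [v1 [d1 [d1' b1]]]]]] [_ [_ [u2 [v2 [d2 [d2' b2]]]]]].
have [e1 nu1 _ hv1 _] := diff_swap d1 d1'.
have [e2 nu2 _ hv2 _] := diff_swap d2 d2'.
have [p1 pp1 l1 A1] := below_inv b1.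
have [p2 pp2 l2 A2] := below_inv b2.
have fI := proj1 mI.
case: (eqVneq v1 v2) => [ev|nev].
- subst v2.
  have pu : pi u1 = pi u2 by rewrite p1 p2.
  have nu1v := neq_in nu1 hv1; have nu2v := neq_in nu2 hv1.
  have key x y : x \notin I -> y \notin I -> x != y -> (x == v1) = false -> (y == v1) = false ->
      ((I :|: [set x]) :\ v1) :\: ((I :|: [set y]) :\ v1) = [set x].
    move=> hx hy nxy ex ey; apply/setP => z; rewrite !inE.
    have [->|nzx] := eqVneq z x; first by rewrite ex (negPf hx) (negPf nxy).
    by rewrite orbF; case: (z == v1); case: (z \in I); case: (z == y).
  case: (ltngtP u1 u2) => h.
  + have nuu : u1 != u2 by rewrite neq_ltn h.
    have t : tri a J1 J2.
      split => //; split => //; exists u1, u2; rewrite e1 e2; split; [|split].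
      * by apply: key.
      * by apply: key; rewrite // eq_sym.
      * by apply: below_of.
    by exists J1; split; [exact: Mfam_self | exact: Mfam_one].
  + have nuu : u2 != u1 by rewrite neq_ltn h.
    have t : tri a J2 J1.
      split => //; split => //; exists u2, u1; rewrite e1 e2; split; [|split].
      * by apply: key.
      * by apply: key; rewrite // eq_sym.
      * by apply: below_of => //; rewrite -pu.
    by exists J2; split; [exact: Mfam_one | exact: Mfam_self].
  + have eu : u1 = u2 by apply: ord_inj.
    exists J1; split; first exact: Mfam_self.
    by rewrite e1 e2 eu; exact: Mfam_self.
- have npv : pi v1 != pi v2.
    by apply/eqP => ee; move/eqP: nev; apply; exact: feas_pi_inj fI hv1 hv2 ee.
  have nuu : u1 != u2 by apply/eqP => ee; move/eqP: npv; apply; rewrite -p1 -p2 ee.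
  have u2J1 : u2 \notin J1 by rewrite e1 !inE (negPf nu2) [u2 == u1]eq_sym (negPf nuu) /= andbF.
  have v2J1 : v2 \in J1 by rewrite e1 !inE hv2 eq_sym nev.
  have u1J2 : u1 \notin J2 by rewrite e2 !inE (negPf nu1) (negPf nuu) /= andbF.
  have v1J2 : v1 \in J2 by rewrite e2 !inE hv1 nev.
  have u1J1 : u1 \in J1 by rewrite e1 !inE eqxx orbT andbT (neq_in nu1 hv1).
  have u2J2 : u2 \in J2 by rewrite e2 !inE eqxx orbT andbT (neq_in nu2 hv2).
  set L := (J1 :|: [set u2]) :\ v2.
  have eL : L = (J2 :|: [set u1]) :\ v1.
    rewrite /L e1 e2; apply/setP => z; rewrite !inE.
    have [->|nz1] := eqVneq z u1.
      by rewrite (neq_in nu1 hv1) (neq_in nu1 hv2) (negPf nu1) /= (negPf nuu).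
    have [->|nz2] := eqVneq z u2.
      by rewrite (neq_in nu2 hv1) (neq_in nu2 hv2) (negPf nu2) /=.
    by case: (z == v1); case: (z == v2); case: (z \in I).
  have memL x : x \in L -> [\/ (x \in J1) && (x \in J2), x = u1 | x = u2].
    have [->|nz1] := eqVneq x u1; first by move=> _; constructor 2.
    have [->|nz2] := eqVneq x u2; first by move=> _; constructor 3.
    move=> H; constructor 1; move: H; rewrite /L e1 e2 !inE (negPf nz1) (negPf nz2).
    by case: (x == v1); case: (x == v2); case: (x \in I).
  have cross : (u1 < u2) && (A u1 < A u2) || (u2 < u1) && (A u2 < A u1).
    case: (ltngtP (pi v1) (pi v2)) => hp.
    + have q1 : pi u1 < pi v2 by rewrite p1.
      have q2 : pi v1 < pi u2 by rewrite p2.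
      have /andP[h1 h2] := feas_pi (proj1 mJ1) u1J1 v2J1 q1.
      have /andP[h3 h4] := feas_pi (proj1 mJ2) v1J2 u2J2 q2.
      by rewrite (ltn_trans l1 h3) (ltn_trans h2 A2).
    + have q1 : pi u2 < pi v1 by rewrite p2.
      have q2 : pi v2 < pi u1 by rewrite p1.
      have /andP[h1 h2] := feas_pi (proj1 mJ2) u2J2 v1J2 q1.
      have /andP[h3 h4] := feas_pi (proj1 mJ1) v2J1 u1J1 q2.
      by rewrite (ltn_trans l2 h3) (ltn_trans h2 A1) orbT.
    + by rewrite hp eqxx in npv.
  have fL : feasible a L.
    move=> x y hx hy hxy.
    have f1 := proj1 mJ1; have f2 := proj1 mJ2.
    case: (memL x hx) => [/andP[x1 x2]|ex|ex]; case: (memL y hy) => [/andP[y1 y2]|ey|ey].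
    + exact: f1.
    + by apply: f1 => //; rewrite ey.
    + by apply: f2 => //; rewrite ey.
    + by apply: f1 => //; rewrite ex.
    + by rewrite ex ey ltnn in hxy.
    + subst x y; case/orP: cross => /andP[h1 h2] //.
      by have := ltn_trans h1 hxy; rewrite ltnn.
    + by apply: f2 => //; rewrite ex.
    + subst x y; case/orP: cross => /andP[h1 h2] //.
      by have := ltn_trans h1 hxy; rewrite ltnn.
    + by rewrite ex ey ltnn in hxy.
  have mL : maxfeas a L.
    by apply: maxfeas_of => //; rewrite /L card_swap // maxfeas_card.
  have [dd1 dd1'] := swap_diff u2J1 v2J1.
  have [dd2 dd2'] := swap_diff u1J2 v1J2.
  rewrite -/L -eL in dd2 dd2'.
  exists L; split; apply: Mfam_one.
  + by split => //; split => //; exists u2, v2; split; [done|split].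
  + by split => //; split => //; exists u1, v1; split; [done|split].
Qed.

Lemma uniq_min I K1 K2 : maxfeas a I -> Mfam a I K1 -> tri_minimal a K1 ->
  Mfam a I K2 -> tri_minimal a K2 -> K1 = K2.
Proof.
move=> mI; move: {2}(mu I).+1 (ltnSn (mu I)) => m.
elim: m I mI K1 K2 => // m IH I mI K1 K2 hm h1 n1 h2 n2.
case: (Mfam_left h1) => [e1|[J1 [t1 m1]]]; case: (Mfam_left h2) => [e2|[J2 [t2 m2]]].
- by rewrite e1 e2.
- by exfalso; apply: n1; exists J2; rewrite e1; split => //; exact: proj1 t2.
- by exfalso; apply: n2; exists J1; rewrite e2; split => //; exact: proj1 t1.
- have [L [l1 l2]] := confl mI t1 t2.
  have mJ1 := proj1 t1; have mJ2 := proj1 t2.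
  have [K3 [k3 n3]] := exists_min (Mfam_max mJ1 l1).
  have hm1 : mu J1 < m := leq_trans (mu_tri t1) (hm : mu I < m.+1).
  have hm2 : mu J2 < m := leq_trans (mu_tri t2) (hm : mu I < m.+1).
  rewrite (IH J1 mJ1 K1 K3 hm1 m1 n1 (Mfam_trans l1 k3) n3).
  by rewrite (IH J2 mJ2 K2 K3 hm2 m2 n2 (Mfam_trans l2 k3) n3).
Qed.

Lemma same_min I I' : maxfeas a I -> tri a I' I ->
  forall K, (Mfam a I K /\ tri_minimal a K) <-> (Mfam a I' K /\ tri_minimal a K).
Proof.
move=> mI t K; split => -[h1 h2]; last by split => //; exact: Mfam_trans (Mfam_one t) h1.
have [K' [k1 k2]] := exists_min (proj1 t).
have := uniq_min mI h1 h2 (Mfam_trans (Mfam_one t) k1) k2.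
by move=> ->.
Qed.

Lemma path_min s (I : {set 'I_n.+1}) : maxfeas a I -> (forall K, K \in s -> feasible a K) -> rpath I s ->
  forall K, (Mfam a I K /\ tri_minimal a K) <-> (Mfam a (last I s) K /\ tri_minimal a K).
Proof.
elim: s I => [//|I' s IH] I mI hs /= [st hp] K.
have [mI' [t|t]] := step_tri mI (hs I' (mem_head _ _)) st.
- rewrite (same_min mI t); apply: IH => // K0 hK0; apply: hs; by rewrite inE hK0 orbT.
- rewrite -(same_min mI' t); apply: IH => // K0 hK0; apply: hs; by rewrite inE hK0 orbT.
Qed.

Lemma rpath_cat (I : {set 'I_n.+1}) s1 s2 : rpath I (s1 ++ s2) <-> rpath I s1 /\ rpath (last I s1) s2.
Proof.
elim: s1 I => [|J s1 IH] I /=; first by split => // -[].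
by rewrite IH; split => [[? [? ?]]|[[? ?] ?]].
Qed.

Lemma reconf_trans I J K : reconf a I J -> reconf a J K -> reconf a I K.
Proof.
move=> [s1 [f1 [h1 [p1 l1]]]] [s2 [f2 [h2 [p2 l2]]]].
exists (s1 ++ s2); split => //; split.
  by move=> X; rewrite mem_cat => /orP[]; [exact: h1|exact: h2].
by rewrite rpath_cat last_cat l1; split.
Qed.

Lemma reconf_one I J : feasible a I -> feasible a J -> rstep I J -> reconf a I J.
Proof.
move=> fI fJ st; exists [:: J]; split => //; split; last by split.
by move=> X; rewrite inE => /eqP->.
Qed.

Lemma Mfam_reconf I K : maxfeas a I -> Mfam a I K -> reconf a I K /\ reconf a K I.
Proof.
move=> mI; elim=> [|J J' hm [r1 r2] t].
  by split; exists [::]; split => //; exact: proj1 mI.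
have [s1 s2] := tri_rstep t.
have fJ := proj1 (proj1 (proj2 t)); have fJ' := proj1 (proj1 t).
split.
- by apply: reconf_trans r1 _; exact: reconf_one.
- by apply: reconf_trans _ r2; exact: reconf_one.
Qed.

Lemma main I J : maxfeas a I -> maxfeas a J -> (reconf a I J <-> tri_equiv a I J).
Proof.
move=> mI mJ; split.
- move=> [s [fI [hs [hp hl]]]].
  have [K [k1 k2]] := exists_min mI.
  have := (path_min mI hs hp K).1 (conj k1 k2); rewrite hl => -[k3 _].
  by exists K.
- move=> [K [k1 k2 _]].
  have [r1 _] := Mfam_reconf mI k1.
  have [_ r2] := Mfam_reconf mJ k2.
  exact: reconf_trans r1 r2.
Qed.

End Pat.

Unset Implicit Arguments.
Set Strict Implicit.

Theorem lemma3 (n : nat) (a : 'I_n -> nat)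
  (a_inj : injective a) (a_range : forall j, 1 <= a j <= n)
  (I J : {set 'I_n.+1}) :
  maxfeas a I -> maxfeas a J ->
  (reconf a I J <-> tri_equiv a I J).
Proof. exact: (main a_inj a_range). Qed.
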